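(* Assume Assumption 1. Assume there is a constant $L>0$ such that for every $T^Y_0\in\mathbb{T}^Y_0$ and all $(x_1,y_1),(x_2,y_2)\in\mathcal{X}_T\times\mathcal{Y}_S$, $$\|T^Y_0(x_1,y_1)-T^Y_0(x_2,y_2)\|_{\mathcal{Y}_T}\le L\big(\|x_1-x_2\|_{\mathcal{X}_T}+\|y_1-y_2\|_{\mathcal{Y}_S}\big).$$ Assume also there are $L'>0$ and $p\ge1$ such that the output transport risk satisfies $$|\mathcal{E}^O(h_1)-\mathcal{E}^O(h_2)|\le L'\,\mathcal{W}_p\big(h_1\#Law(X_T),h_2\#Law(X_T)\big)^p$$ for all intermediate models $h_1,h_2$ (arising from any pretrained models in $A_S$). Then for every fixed $\mu\in\mathcal{P}(\mathcal{X}_S)$, the map $f\mapsto\mathcal{C}(\mu,f)$ is continuous on $(A_S,d_M)$.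
   Context: Transfer learning framework. A source task $S$ consists of an input space $\mathcal{X}_S$ and output space $\mathcal{Y}_S$ (finite-dimensional normed spaces), a random pair $(X_S,Y_S)$, a set $A_S$ of admissible models $f:\mathcal{X}_S\to\mathcal{Y}_S$ and a pretrained model $f_S^*\in A_S$. A target task $T$ has analogous $\mathcal{X}_T,\mathcal{Y}_T,(X_T,Y_T),A_T$ and optimal target model $f_T^*$. Fixed sets $\mathbb{T}^X_0$ of maps $\mathcal{X}_T\to\mathcal{X}_S$ and $\mathbb{T}^Y_0$ of maps $\mathcal{X}_T\times\mathcal{Y}_S\to\mathcal{Y}_T$ are given. For $(T^X_0,T^Y_0)$ the intermediate model is $f_{ST}(x)=T^Y_0(x,f_S^*(T^X_0(x)))$; $\mathbb{P}_T=Law(f_T^*(X_T))$, $\mathbb{P}_{ST}=Law(f_{ST}(X_T))$. An output transport risk is $\mathcal{E}^O:A_T\to\mathbb{R}$ with $\mathcal{E}^O\ge0$ and $\mathcal{E}^O(f_{ST})=0$ iff $\mathbb{P}_{ST}=\mathbb{P}_T$. An input transport risk $\mathcal{E}^I$ satisfies $\mathcal{E}^I(T^X_0)\ge0$, with equality iff $T^X_0\#Law(X_T)=Law(X_S)$. The model-specific transfer risk is $\mathcal{C}(S,T\mid f_{ST})=C(\mathcal{E}^O(f_{ST}),\mathcal{E}^I(T^X_0))$, with $C:\mathbb{R}^2\to\mathbb{R}$, $C(0,0)=0$, $C\ge0$ on relevant values, non-decreasing in each argument, and $|C(a,b)-C(a',b')|\le L_C(|a-a'|+|b-b'|)$ for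 some $L_C>0$. The transfer risk is $\mathcal{C}(S,T)=\inf_{(T^X_0,T^Y_0)\in\mathbb{T}^X_0\times\mathbb{T}^Y_0}\mathcal{C}(S,T\mid f_{ST})$. With target and transport sets fixed, a source task is $S=(\mu,f)\in\mathcal{P}(\mathcal{X}_S)\times A_S$ ($\mu=Law(X_S)$, $f=f_S^*$) and $\mathcal{C}(\mu,f):=\mathcal{C}(S,T)$. Assumption 1: $D$ is a metric on $\mathcal{P}(\mathcal{X}_S)$ and $\mathcal{E}^I(T^X_0)=D(T^X_0\#Law(X_T),\mu)$. For a fixed constant $M>0$, $d_M(f_1,f_2):=\min\{M,\sup_{x\in\mathcal{X}_S}\|f_1(x)-f_2(x)\|_{\mathcal{Y}_S}\}$ on $A_S$. $\mathcal{W}_p$ is the $p$-Wasserstein distance on probability measures on $\mathcal{Y}_T$ with finite $p$-th moment: $\mathcal{W}_p(\nu_1,\nu_2)^p=\inf_{\gamma\in\Pi(\nu_1,\nu_2)}\int\|x-y\|^p_{\mathcal{Y}_T}\,d\gamma(x,y)$. *)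

(* Defs.v *)
From HB Require Import structures.
From mathcomp Require Import all_boot all_order all_algebra.
From mathcomp Require Import all_classical all_reals all_analysis.
Set Implicit Arguments. Unset Strict Implicit. Unset Printing Implicit Defensive.
Import Order.TTheory GRing.Theory Num.Theory.
Import numFieldNormedType.Exports.
Local Open Scope classical_set_scope.
Local Open Scope ring_scope.

Definition findim (R : realType) (V : lmodType R) : Prop :=
  exists (n : nat) (b : 'I_n -> V),
    forall v : V, exists! c : 'I_n -> R, v = \sum_(i < n) c i *: b i.

Definition borelT (R : realType) (V : normedModType R) :=
  g_sigma_algebraType (@open V).

Definition same_law d (T : measurableType d) (R : realType)
  (m1 m2 : set T -> \bar R) : Prop :=
  forall A : set T, measurable A -> m1 A = m2 A.

Definition is_metric_on_prob d (T : measurableType d) (R : realType)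
  (D : (set T -> \bar R) -> (set T -> \bar R) -> R) : Prop :=
  (forall P Q : probability T R, 0 <= D P Q) /\
  (forall P Q : probability T R, D P Q = 0 <-> same_law P Q) /\
  (forall P Q : probability T R, D P Q = D Q P) /\
  (forall P Q S : probability T R, D P S <= D P Q + D Q S).

Definition couplings (R : realType) (V : normedModType R)
  (nu1 nu2 : set (borelT V) -> \bar R) :
  set (probability (borelT V * borelT V)%type R) :=
  [set g | (forall A : set (borelT V), measurable A -> g (A `*` setT) = nu1 A) /\
           (forall B : set (borelT V), measurable B -> g (setT `*` B) = nu2 B)].

(* W_p(nu1, nu2)^p = inf over couplings of \int |x - y|^p (extended real). *)
Definition Wpp (R : realType) (V : normedModType R) (p : R)
  (nu1 nu2 : set (borelT V) -> \bar R) : \bar R :=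
  ereal_inf [set (\int[g]_z ((`|(z.1 : V) - (z.2 : V)| `^ p)%:E))%E
            | g in couplings nu1 nu2].

Definition fST (R : realType) (XS XT YS YT : normedModType R)
  (TX : borelT XT -> borelT XS) (TY : (borelT XT * borelT YS)%type -> borelT YT)
  (f : borelT XS -> borelT YS) : borelT XT -> borelT YT :=
  fun x => TY (x, f (TX x)).

(* The transfer risk C(mu, f) = inf over transports of
   C(E^O(f_ST), D(T^X_0 # Law(X_T), mu))   (Assumption 1 for E^I). *)
Definition transfer_risk (R : realType) (XS XT YS YT : normedModType R)
  (C : R -> R -> R) (EO : (borelT XT -> borelT YT) -> R)
  (D : (set (borelT XS) -> \bar R) -> (set (borelT XS) -> \bar R) -> R)
  (PT : probability (borelT XT) R)
  (TXs : set (borelT XT -> borelT XS))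
  (TYs : set ((borelT XT * borelT YS)%type -> borelT YT))
  (mu : probability (borelT XS) R) (f : borelT XS -> borelT YS) : R :=
  inf [set C (EO (fST z.1 z.2 f)) (D (pushforward PT z.1) mu)
      | z in TXs `*` TYs].

Definition dM (R : realType) (XS YS : normedModType R) (M : R)
  (f1 f2 : borelT XS -> borelT YS) : R :=
  fine (Order.min M%:E
          (ereal_sup [set (`|(f1 x : YS) - (f2 x : YS)|)%:E | x in [set: XS]])).

(* Main.v *)
Require Import Defs.
From HB Require Import structures.
From mathcomp Require Import all_boot all_order all_algebra.
From mathcomp Require Import all_classical all_reals all_analysis.
From mathcomp Require Import measurable_realfun.
From mathcomp Require Import ring lra.
Import Order.TTheory GRing.Theory Num.Theory.
Import numFieldNormedType.Exports.
Local Open Scope classical_set_scope.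
Local Open Scope ring_scope.
Import HBNNSimple.

Lemma Wpp_le (R : realType) d (T : measurableType d) (V : normedModType R)
  (PT : probability T R) (h1 h2 : T -> borelT V)
  (mh1 : measurable_fun setT h1) (mh2 : measurable_fun setT h2) (p c : R) :
  (forall x, `|(h1 x : V) - h2 x| `^ p <= c) ->
  (Wpp p (pushforward PT h1) (pushforward PT h2) <= c%:E)%E.
Proof.
move=> hc.
pose m := fun x => (h1 x, h2 x).
have mm : measurable_fun setT m by exact: measurable_fun_pair.
pose mX : {mfun T >-> (borelT V * borelT V)%type} :=
  HB.pack m (isMeasurableFun.Build _ _ _ _ _ mm).
pose g : probability _ R := distribution PT mX.
apply: (@le_trans _ _ (\int[g]_z ((`|(z.1 : V) - (z.2 : V)| `^ p)%:E))%E).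
  apply: ereal_inf_lbound; exists g => //; split.
    by move=> A _; rewrite /g /distribution /pushforward /=; congr (PT _);
       apply/seteqP; split => x /=; [case|].
  by move=> A _; rewrite /g /distribution /pushforward /=; congr (PT _);
       apply/seteqP; split => x /=; [case|].
rewrite ge0_integralTE; last by move=> z; rewrite lee_fin powR_ge0.
apply: ge_ereal_sup => _ [h /= hle <-].
have E := integral_nnsfun g measurableT h; rewrite patch_setT in E.
rewrite -E /g /distribution ge0_integral_pushforward//; last 2 first.
- by apply/measurable_EFinP.
- by move=> y _; rewrite lee_fin.
rewrite preimage_setT.
apply: (@le_trans _ _ (\int[PT]_x (cst c%:E) x)%E); last first.
  rewrite integral_cst//. have H2 : forall x, x = 1%E -> (c%:E * x <= c%:E)%E by move=> x ->; rewrite mule1. by apply: H2; exact: probability_setT.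
apply: ge0_le_integral => //.
- by move=> x _; rewrite lee_fin.
- apply/measurable_EFinP; exact: measurableT_comp.
- move=> x _ /=; apply: le_trans (hle (m x)) _; rewrite lee_fin; exact: hc.
Qed.

Lemma inf_step (R : realType) (I : Type) (S : set I) (u v : I -> R) (K : R) :
  S !=set0 -> has_lbound (u @` S) -> (forall z, S z -> u z - K <= v z) ->
  inf (u @` S) - K <= inf (v @` S).
Proof.
move=> [z0 Sz0] hl huv; apply: lb_le_inf; first by exists (v z0), z0.
move=> _ [z Sz <-]; apply: le_trans (huv z Sz); rewrite lerD2r.
by apply: ge_inf => //; exists z.
Qed.

Lemma inf_close (R : realType) (I : Type) (S : set I) (u v : I -> R) (K : R) :
  0 <= K -> (forall z, S z -> `|u z - v z| <= K) ->
  `|inf (u @` S) - inf (v @` S)| <= K.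
Proof.
move=> K0 huv.
have h1 : forall z, S z -> u z - K <= v z.
  move=> z Sz; move: (huv z Sz); rewrite ler_norml => /andP[_ h].
  lra.
have h2 : forall z, S z -> v z - K <= u z.
  move=> z Sz; move: (huv z Sz); rewrite ler_norml => /andP[h _].
  lra.
have [nS|nS] := pselect (S !=set0); last first.
  have S0 : S = set0 by apply/seteqP; split=> z // Sz; apply: nS; exists z.
  by rewrite S0 !image_set0 inf0 subrr normr0.
have [hu|hu] := pselect (has_lbound (u @` S)).
  have hv : has_lbound (v @` S).
    case: hu => b hb; exists (b - K) => _ [z Sz <-].
    apply: le_trans (h1 z Sz); rewrite lerD2r; apply: hb; by exists z.
  have a1 := @inf_step R _ S u v K nS hu h1.
  have a2 := @inf_step R _ S v u K nS hv h2.
  rewrite ler_norml; apply/andP; split; lra.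
have hv : ~ has_lbound (v @` S).
  case=> b hb; apply: hu; exists (b - K) => _ [z Sz <-].
  apply: le_trans (h2 z Sz); rewrite lerD2r; apply: hb; by exists z.
rewrite !inf_out ?subrr ?normr0// => -[_ //].
Qed.

Lemma dM_bound (R : realType) (XS YS : normedModType R) (M : R)
  (f g : borelT XS -> borelT YS) :
  dM M f g < M -> forall x, `|(f x : YS) - g x| <= dM M f g.
Proof.
rewrite /dM; set S := ereal_sup _ => hlt x.
have hx : ((`|(f x : YS) - g x|)%:E <= S)%E.
  by apply: ereal_sup_ubound; exists x.
have [hMS|hSM] := leP (M%:E) S.
  by move: hlt; rewrite min_l //= ltxx.

have Sfin : S \is a fin_num.
  rewrite fin_numE; apply/andP; split.
    apply/negP => /eqP Sn; move: hx; rewrite Sn leeNy_eq //.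
  by apply/negP => /eqP Sp; move: hSM; rewrite Sp ltNge leey.
by rewrite -lee_fin fineK.
Qed.
Theorem mainTheorem3
  (R : realType) (XS XT YS YT : normedModType R)
  (* finite-dimensional normed spaces *)
  (hXS : findim XS) (hXT : findim XT) (hYS : findim YS) (hYT : findim YT)
  (* target task: Law(X_T), admissible models A_T, optimal target model f_T^* *)
  (PT : probability (borelT XT) R)
  (AT : set (borelT XT -> borelT YT)) (fT : borelT XT -> borelT YT)
  (hfT_AT : AT fT) (hfT_meas : measurable_fun setT fT)
  (* source admissible models (measurable) *)
  (AS : set (borelT XS -> borelT YS))
  (hAS_meas : forall f, AS f -> measurable_fun setT f)
  (* transport sets (measurable maps) *)
  (TXs : set (borelT XT -> borelT XS))
  (TYs : set ((borelT XT * borelT YS)%type -> borelT YT))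
  (hTX_meas : forall TX, TXs TX -> measurable_fun setT TX)
  (hTY_meas : forall TY, TYs TY -> measurable_fun setT TY)
  (* intermediate models are admissible target models *)
  (hfST_AT : forall TX TY f, TXs TX -> TYs TY -> AS f -> AT (fST TX TY f))
  (* output transport risk *)
  (EO : (borelT XT -> borelT YT) -> R)
  (hEO_ge0 : forall h, AT h -> 0 <= EO h)
  (hEO_0 : forall TX TY f, TXs TX -> TYs TY -> AS f ->
     (EO (fST TX TY f) = 0 <-> same_law (pushforward PT (fST TX TY f))
                                        (pushforward PT fT)))
  (* Assumption 1: E^I(T^X_0) = D(T^X_0 # Law(X_T), mu) with D a metric *)
  (D : (set (borelT XS) -> \bar R) -> (set (borelT XS) -> \bar R) -> R)
  (hD : is_metric_on_prob D)
  (* the function C *)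
  (C : R -> R -> R) (LC : R) (hLC : 0 < LC)
  (hC00 : C 0 0 = 0)
  (hC_ge0 : forall a b, 0 <= a -> 0 <= b -> 0 <= C a b)
  (hC_mon1 : forall a a' b, a <= a' -> C a b <= C a' b)
  (hC_mon2 : forall a b b', b <= b' -> C a b <= C a b')
  (hC_lip : forall a b a' b', `|C a b - C a' b'| <= LC * (`|a - a'| + `|b - b'|))
  (* Lipschitz transport maps T^Y_0 *)
  (L : R) (hL : 0 < L)
  (hTY_lip : forall TY, TYs TY -> forall (x1 x2 : XT) (y1 y2 : YS),
     `|(TY (x1, y1) : YT) - TY (x2, y2)| <= L * (`|x1 - x2| + `|y1 - y2|))
  (* output transport risk controlled by W_p^p *)
  (L' : R) (hL' : 0 < L') (p : R) (hp : 1 <= p)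
  (hEO_W : forall TX1 TY1 f1 TX2 TY2 f2,
     TXs TX1 -> TYs TY1 -> AS f1 -> TXs TX2 -> TYs TY2 -> AS f2 ->
     ((`|EO (fST TX1 TY1 f1) - EO (fST TX2 TY2 f2)|)%:E
       <= L'%:E * Wpp p (pushforward PT (fST TX1 TY1 f1))
                        (pushforward PT (fST TX2 TY2 f2)))%E)
  (* the constant M of d_M *)
  (M : R) (hM : 0 < M) :
  forall mu : probability (borelT XS) R,
  forall f, AS f -> forall eps : R, 0 < eps -> exists delta : R, 0 < delta /\
    forall g, AS g -> dM M f g < delta ->
      `|transfer_risk C EO D PT TXs TYs mu f
        - transfer_risk C EO D PT TXs TYs mu g| < eps.
Proof.
move=> mu f Af eps eps0.
have hLCL' : 0 < LC * L' * L by rewrite !mulr_gt0.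
pose delta := Num.min M (Num.min L^-1 (eps / (2 * (LC * L' * L)))).
have hepsd : 0 < eps / (2 * (LC * L' * L)) by rewrite divr_gt0 // mulr_gt0.
exists delta; split.
  by rewrite !lt_min hM invr_gt0 hL hepsd.
move=> g Ag hd.
have hd' := hd; rewrite !lt_min in hd'.
case/and3P: hd' => hdM hdL hde.
have hpt := @dM_bound R XS YS M f g hdM.
set s := dM M f g in hpt hdL hde *.
have s0 : 0 <= s := le_trans (normr_ge0 _) (hpt 0).
set t := L * s.
have t0 : 0 <= t by rewrite mulr_ge0 // ltW.
have t1 : t <= 1.
  rewrite /t; move: hdL; rewrite -(ltr_pM2l hL) mulfV ?gt_eqF // => /ltW //.
have hK : LC * L' * t * 2 < eps.
  move: hde; rewrite ltr_pdivlMr ?mulr_gt0 //.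
  by rewrite (_ : s * (2 * (LC * L' * L)) = LC * L' * t * 2) // /t; ring.
have K0 : 0 <= LC * L' * t by rewrite !mulr_ge0 // ltW.
rewrite /transfer_risk.
apply: (le_lt_trans (@inf_close R _ (TXs `*` TYs)
  (fun z => C (EO (fST z.1 z.2 f)) (D (pushforward PT z.1) mu))
  (fun z => C (EO (fST z.1 z.2 g)) (D (pushforward PT z.1) mu)) _ K0 _)); last by lra.
move=> [TX TY] [/= hTX hTY].
apply: le_trans (hC_lip _ _ _ _) _.
rewrite subrr normr0 addr0 -mulrA ler_wpM2l ?(ltW hLC) //.
have mfST : forall h, AS h -> measurable_fun setT (fST TX TY h).
  move=> h Ah.
  exact: (measurableT_comp (hTY_meas _ hTY) (measurable_fun_pair (@measurable_id _ _ setT) (measurableT_comp (hAS_meas _ Ah) (hTX_meas _ hTX)))).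
have hW := hEO_W TX TY f TX TY g hTX hTY Af hTX hTY Ag.
have hW2 : (Wpp p (pushforward PT (fST TX TY f)) (pushforward PT (fST TX TY g)) <= t%:E)%E.
  apply: Wpp_le; [exact: mfST|exact: mfST|].
  move=> x; set a := `|_|.
  have ha : a <= t.
    rewrite /a /fST; apply: le_trans (hTY_lip TY hTY x x _ _) _.
    by rewrite subrr normr0 add0r ler_wpM2l ?(ltW hL) // hpt.
  have a0 : 0 <= a by exact: normr_ge0.
  have [a00|anz] := eqVneq a 0.
    by rewrite a00 powR0 // gt_eqF // (lt_le_trans ltr01 hp).
  apply: (le_trans (ge1r_powR _ hp) ha).
  by rewrite lt_def anz a0 /= (le_trans ha t1).
rewrite -lee_fin; apply: le_trans hW _; rewrite EFinM.
by apply: lee_wpmul2l => //; rewrite lee_fin ltW.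
Qed.
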